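(* Consider the closed-loop system $\dot x=f^{\mathsf c}(x,w)=f(x,N(x),w)$ on $\mathbb{R}^n$ with $f^{\mathsf c}$ continuous and locally Lipschitz in $x$, and disturbance set $[\underline w,\overline w]$. Let $T\in\mathbb{R}^{n\times n}$ be invertible, $\Phi(x)=Tx$, and let $\dot y=g^{\mathsf c}(y,w):=Tf(T^{-1}y,N(T^{-1}y),w)$ be the transformed system. Let $\mathsf G^{\mathsf c}_{\mathcal S}$ be an $\mathcal S$-localized inclusion function for $g^{\mathsf c}$, let $\mathsf E_{T,\mathcal S}$ be the embedding map induced by $\mathsf G^{\mathsf c}_{\mathcal S}$, and let $[\underline y_0,\overline y_0]\subseteq\mathcal S$. If $\mathsf E_{T,\mathcal S}(\underline y_0,\overline y_0,\underline w,\overline w)\ge_{\mathrm{SE}}0$, then the paralleletope $\Phi^{-1}([\underline y_0,\overline y_0])=\{T^{-1}y:y\in[\underline y_0,\overline y_0]\}$ is a $[\underline w,\overline w]$-robustly forward invariant set for $\dot x=f^{\mathsf c}(x,w)$.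
   Context: Notation: $x\le y$ componentwise; $[\underline y,\overline y]=\{y:\underline y\le y\le\overline y\}$; $\mathcal T^{2n}_{\ge0}=\{(x,\hat x):x\le\hat x\}$; $(a,b)\ge_{\mathrm{SE}}0$ means $a\ge0$ and $b\le0$ componentwise. $y_{i:z}$ is $y$ with $i$-th entry replaced by $z_i$. An $\mathcal S$-localized inclusion function $\mathsf G=(\underline{\mathsf G},\overline{\mathsf G})$ for $g^{\mathsf c}$ satisfies $\underline{\mathsf G}(\underline y,\overline y,\underline w,\overline w)\le g^{\mathsf c}(y,w)\le\overline{\mathsf G}(\underline y,\overline y,\underline w,\overline w)$ for all $y\in[\underline y,\overline y]\subseteq\mathcal S$, $w\in[\underline w,\overline w]$. Induced embedding map: $(\underline{\mathsf E}_{T,\mathcal S})_i=(\underline{\mathsf G}(\underline y,\overline y_{i:\underline y},\underline w,\overline w))_i$, $(\overline{\mathsf E}_{T,\mathcal S})_i=(\overline{\mathsf G}(\underline y_{i:\overline y},\overline y,\underline w,\overline w))_i$. A set $\mathcal X$ is $\mathcal W$-robustly forward invariant if every solution starting in $\mathcal X$ under any piecewise continuous disturbance with values in $\mathcal W$ remains in $\mathcal X$ for all $t\ge0$. *)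

(* Defs.v *)
From HB Require Import structures.
From mathcomp Require Import all_boot all_order all_algebra.
From mathcomp Require Import all_classical all_reals all_analysis.
Set Implicit Arguments. Unset Strict Implicit. Unset Printing Implicit Defensive.
Import Order.TTheory GRing.Theory Num.Theory.
Import numFieldNormedType.Exports.
Local Open Scope classical_set_scope.
Local Open Scope ring_scope.

Section Defs.
Variable R : realType.

Definition vle (n : nat) (x y : 'cV[R]_n) : Prop := forall i, x i 0 <= y i 0.

Definition box (n : nat) (lo hi : 'cV[R]_n) : set 'cV[R]_n :=
  [set y | vle lo y /\ vle y hi].

Definition repl (n : nat) (y : 'cV[R]_n) (i : 'I_n) (z : 'cV[R]_n) : 'cV[R]_n :=
  \col_j (if j == i then z j 0 else y j 0).

Definition closed_loop (n p q : nat)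
  (f : 'cV[R]_n -> 'cV[R]_p -> 'cV[R]_q -> 'cV[R]_n) (N : 'cV[R]_n -> 'cV[R]_p)
  : 'cV[R]_n -> 'cV[R]_q -> 'cV[R]_n := fun x w => f x (N x) w.

Definition transformed (n p q : nat) (T : 'M[R]_n)
  (f : 'cV[R]_n -> 'cV[R]_p -> 'cV[R]_q -> 'cV[R]_n) (N : 'cV[R]_n -> 'cV[R]_p)
  : 'cV[R]_n -> 'cV[R]_q -> 'cV[R]_n :=
  fun y w => T *m f (invmx T *m y) (N (invmx T *m y)) w.

Definition jointly_continuous (n q : nat) (F : 'cV[R]_n -> 'cV[R]_q -> 'cV[R]_n)
  : Prop := continuous (fun xw : 'cV[R]_n * 'cV[R]_q => F xw.1 xw.2).

Definition locally_lipschitz_x (n q : nat) (F : 'cV[R]_n -> 'cV[R]_q -> 'cV[R]_n)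
  (W : set 'cV[R]_q) : Prop :=
  forall x0 : 'cV[R]_n, exists r : R, exists L : R, 0 < r /\
    forall x x' w, `|x - x0| < r -> `|x' - x0| < r -> W w ->
      `|F x w - F x' w| <= L * `|x - x'|.

Definition localized_inclusion (n q : nat) (g : 'cV[R]_n -> 'cV[R]_q -> 'cV[R]_n)
  (S : set 'cV[R]_n)
  (Gl Gu : 'cV[R]_n -> 'cV[R]_n -> 'cV[R]_q -> 'cV[R]_q -> 'cV[R]_n) : Prop :=
  forall yl yu wl wu, box yl yu `<=` S ->
    forall y w, box yl yu y -> box wl wu w ->
      vle (Gl yl yu wl wu) (g y w) /\ vle (g y w) (Gu yl yu wl wu).

Definition emb_lo (n q : nat)
  (Gl : 'cV[R]_n -> 'cV[R]_n -> 'cV[R]_q -> 'cV[R]_q -> 'cV[R]_n)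
  (yl yu : 'cV[R]_n) (wl wu : 'cV[R]_q) : 'cV[R]_n :=
  \col_i (Gl yl (repl yu i yl) wl wu) i 0.
Definition emb_up (n q : nat)
  (Gu : 'cV[R]_n -> 'cV[R]_n -> 'cV[R]_q -> 'cV[R]_q -> 'cV[R]_n)
  (yl yu : 'cV[R]_n) (wl wu : 'cV[R]_q) : 'cV[R]_n :=
  \col_i (Gu (repl yl i yu) yu wl wu) i 0.

Definition ge_SE0 (n : nat) (a b : 'cV[R]_n) : Prop := vle 0 a /\ vle b 0.

Definition piecewise_continuous (q : nat) (w : R -> 'cV[R]_q) : Prop :=
  forall b : R, 0 < b -> exists s : seq R,
    (forall t, 0 < t < b -> t \notin s -> {for t, continuous w}) /\
    (forall t, 0 <= t < b -> cvg (w x @[x --> t^'+])) /\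
    (forall t, 0 < t <= b -> cvg (w x @[x --> t^'-])).

Definition is_solution (n q : nat) (F : 'cV[R]_n -> 'cV[R]_q -> 'cV[R]_n)
  (w : R -> 'cV[R]_q) (x : R -> 'cV[R]_n) : Prop :=
  forall t : R, 0 <= t -> forall i : 'I_n,
    (lebesgue_measure).-integrable `[0, t] (fun s => (F (x s) (w s) i 0)%:E) /\
    x t i 0 = x 0 i 0 + Rintegral lebesgue_measure `[0, t] (fun s => F (x s) (w s) i 0).

Definition robustly_forward_invariant (n q : nat)
  (F : 'cV[R]_n -> 'cV[R]_q -> 'cV[R]_n) (X : set 'cV[R]_n) (W : set 'cV[R]_q)
  : Prop :=
  forall (w : R -> 'cV[R]_q) (x : R -> 'cV[R]_n),
    piecewise_continuous w -> (forall t, 0 <= t -> W (w t)) ->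
    is_solution F w x -> X (x 0) ->
    forall t, 0 <= t -> X (x t).

Definition paralleletope (n : nat) (T : 'M[R]_n) (yl yu : 'cV[R]_n) : set 'cV[R]_n :=
  [set invmx T *m y | y in box yl yu].

End Defs.

(* Main.v *)
Require Import Defs.
From HB Require Import structures.
From mathcomp Require Import all_boot all_order all_algebra.
From mathcomp Require Import all_classical all_reals all_analysis.
From mathcomp Require Import ring lra.
Import Order.TTheory GRing.Theory Num.Theory.
Import numFieldNormedType.Exports.
Local Open Scope classical_set_scope.
Local Open Scope ring_scope.
Set Implicit Arguments. Unset Strict Implicit.

Section Aux.
Variable R : realType.
Notation mu := (@lebesgue_measure R).



Lemma pint_cont (f : R -> R) (b t : R) : 0 <= t -> t < b ->
  mu.-integrable `[0, b] (EFin \o f) ->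
  forall e, 0 < e -> exists2 d, 0 < d & forall s, 0 <= s -> `|s - t| < d ->
   `| \int[mu]_(x in `[0, s]) f x - \int[mu]_(x in `[0, t]) f x| < e.
Proof.
move=> t0 tb fi e e0.
have := parameterized_integral_continuous (ltW (le_lt_trans t0 tb)) fi.
move/subspace_continuousP => /(_ t).
have tin : [set` `[0, b]] t by rewrite /= in_itv /= t0 ltW.
move=> /(_ tin) /cvgrPdist_lt /(_ e e0).
rewrite near_withinE => /nbhs_ballP [d /= d0 Hd].
exists (Num.min d (b - t)); first by rewrite lt_min d0 subr_gt0 tb.
move=> s s0; rewrite lt_min => /andP[sd sb].
have : [set` `[0, b]] s.
  rewrite /= in_itv /= s0 /=.
  move: sb; rewrite ltr_norml => /andP[_]; lra.
move=> H; have := Hd s _ H.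
rewrite /from_subspace /parameterized_integral -normrN opprB; apply.
by rewrite /ball /= -normrN opprB.
Qed.


Lemma real_ind (a b : R) (Q : R -> Prop) : a <= b -> Q a ->
  (forall t, a < t <= b -> (forall s, a <= s < t -> Q s) -> Q t) ->
  (forall t, a <= t < b -> (forall s, a <= s <= t -> Q s) ->
     exists2 d, 0 < d & forall s, t < s < t + d -> Q s) ->
  forall s, a <= s <= b -> Q s.
Proof.
move=> ab Qa Hl Hr.
pose A := [set t | a <= t <= b /\ forall s, a <= s <= t -> Q s].
have Aa : A a.
  split; first by rewrite lexx ab.
  by move=> s; rewrite -eq_le => /eqP <-.
have hs : has_sup A by split; [exists a | exists b => t [/andP[]]].
set c := sup A.
have ac : a <= c by apply: sup_upper_bound.
have cb : c <= b by apply: ge_sup; [exists a | move=> t [/andP[]]].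
have Qlt : forall s, a <= s < c -> Q s.
  move=> s /andP[aS sc].
  have [t [/andP[_ tb] Qt] ct] := @sup_adherent _ A (c - s) ltac:(by rewrite subr_gt0) hs.
  apply: Qt; rewrite aS /=; rewrite -/c in ct; lra.
have Qc : Q c.
  move: ac; rewrite le_eqVlt => /orP[/eqP <- //| ac].
  by apply: Hl => //; rewrite ac cb.
have Ac : A c.
  split; first by rewrite ac cb.
  move=> s /andP[aS]; rewrite le_eqVlt => /orP[/eqP -> //|sc].
  by apply: Qlt; rewrite aS sc.
have cb' : c = b.
  apply/eqP; rewrite eq_le cb /=; rewrite leNgt; apply/negP => cb'.
  have [d d0 Hd] : exists2 d, 0 < d & forall s, c < s < c + d -> Q s.
    by apply: Hr; [rewrite ac cb' | case: Ac].
  pose c' := Num.min (c + d / 2) b.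
  have cc' : c < c' by rewrite /c' lt_min cb' andbT; lra.
  have Ac' : A c'.
    split.
      have h1 : c' <= b by rewrite /c' ge_min lexx orbT.
      apply/andP; split => //; lra.
    move=> s /andP[aS sc'].
    have [sc|cs] := leP s c; first by case: Ac => _; apply; rewrite aS sc.
    apply: Hd; rewrite cs /=; move: sc'; rewrite /c' le_min => /andP[] *; lra.
  have := sup_upper_bound hs Ac'; rewrite -/c; lra.
move=> s /andP[aS sb]; case: Ac => _; apply; rewrite aS cb' sb //.
Qed.


Lemma fin_min (n : nat) (P : 'I_n -> R -> Prop) :
  (forall i d d', 0 < d' -> d' <= d -> P i d -> P i d') ->
  (forall i, exists2 d, 0 < d & P i d) -> exists2 d, 0 < d & forall i, P i d.
Proof.
move=> Pmon H.
have [e He] : exists e : 'I_n -> R, forall i, 0 < e i /\ P i (e i).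
  have [e He] := @boolp.choice _ _ (fun i d => 0 < d /\ P i d)
    (fun i => match H i with ex_intro2 d h1 h2 => ex_intro _ d (conj h1 h2) end).
  by exists e.
exists (\big[Order.min/1]_i e i).
  by apply: lt_bigmin => // i _; case: (He i).
move=> i; case: (He i) => ei Pi; apply: (Pmon i (e i)) => //.
  by apply: lt_bigmin => // j _; case: (He j).
exact: bigmin_le.
Qed.

Lemma norm_entry m k (v : 'M[R]_(m, k)) i j : `|v i j| <= `|v|.
Proof.
rewrite [leRHS]/Num.Def.normr/= mx_normrE.
by apply: le_trans; last exact: (le_bigmax _ _ (i, j)).
Qed.

Lemma norm_le m k (v : 'M[R]_(m, k)) c : 0 <= c -> (forall i j, `|v i j| <= c) ->
  `|v| <= c.
Proof.
move=> c0 H; rewrite [leLHS]/Num.Def.normr/= mx_normrE.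
by apply: bigmax_le => // -[i j] _; exact: H.
Qed.

Lemma norm_lt m k (v : 'M[R]_(m, k)) c : 0 < c -> (forall i j, `|v i j| < c) ->
  `|v| < c.
Proof.
move=> c0 H; rewrite [ltLHS]/Num.Def.normr/= mx_normrE.
by apply: bigmax_lt => // -[i j] _; exact: H.
Qed.

Definition mxK {m k} (A : 'M[R]_(m, k)) : R := 1 + \sum_i \sum_j `|A i j|.

Lemma mxK_gt0 {m k} (A : 'M[R]_(m, k)) : 0 < mxK A.
Proof.
rewrite /mxK; apply: (lt_le_trans ltr01); rewrite lerDl.
by apply: sumr_ge0 => i _; apply: sumr_ge0.
Qed.

Lemma mulmx_norm m k (A : 'M[R]_(m, k)) (v : 'cV[R]_k) : `|A *m v| <= mxK A * `|v|.
Proof.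
apply: norm_le; first by rewrite mulr_ge0 // ltW // mxK_gt0.
move=> i j; rewrite mxE.
apply: (le_trans (ler_norm_sum _ _ _)).
apply: (@le_trans _ _ ((\sum_l `|A i l|) * `|v|)).
  rewrite mulr_suml; apply: ler_sum => l _; rewrite normrM.
  by apply: ler_wpM2l => //; exact: norm_entry.
apply: ler_wpM2r => //.
rewrite /mxK (bigD1 i) //=.
have h1 : 0 <= \sum_(i0 < m | i0 != i) \sum_(j0 < k) `|A i0 j0|.
  by apply: sumr_ge0 => *; apply: sumr_ge0.
lra.
Qed.



Lemma itv_oc_meas (a b : R) : mu `]a, b] = (if a < b then (b - a)%:E else 0%E).
Proof. by rewrite lebesgue_measure_itv /= lte_fin; case: ifP => // _; rewrite EFinB. Qed.

Lemma integrable_cst_itv (a b M : R) : mu.-integrable `]a, b] (EFin \o cst M).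
Proof.
apply/integrableP; split; first by apply/measurable_realfun.measurable_EFinP; exact: measurable_cst.
rewrite (_ : (fun x => `|(EFin \o cst M) x|)%E = cst (`|M|)%:E); last by apply/funext => x.

rewrite integral_cst //= itv_oc_meas; case: ifP => _.
  by rewrite -EFinM ltry.
by rewrite mule0 ltry.
Qed.

Lemma Rint_cst_itv (a b M : R) : a <= b -> \int[mu]_(x in `]a, b]) M = M * (b - a).
Proof.
move=> ab; rewrite Rintegral_cst //.
have := (@lebesgue_measure_itv R `]a, b]) => /= ->; rewrite lte_fin.
move: ab; rewrite le_eqVlt => /orP[/eqP->|->//].
by rewrite ltxx subrr /= mulr0.
Qed.

Lemma int_lb (k : R -> R) (a b M : R) : a <= b ->
  mu.-integrable `]a, b] (EFin \o k) ->
  (forall s, a < s <= b -> M <= k s) -> M * (b - a) <= \int[mu]_(x in `]a, b]) k x.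
Proof.
move=> ab ki H; rewrite -Rint_cst_itv //.
apply: le_Rintegral => //; first exact: integrable_cst_itv.
all: try (move=> s; rewrite /= in_itv /=; apply: H).
Qed.

Lemma int_ub (k : R -> R) (a b M : R) : a <= b ->
  mu.-integrable `]a, b] (EFin \o k) ->
  (forall s, a < s <= b -> k s <= M) -> \int[mu]_(x in `]a, b]) k x <= M * (b - a).
Proof.
move=> ab ki H; rewrite -Rint_cst_itv //.
apply: le_Rintegral => //; first exact: integrable_cst_itv.
all: try (move=> s; rewrite /= in_itv /=; apply: H).
Qed.


Definition cont_at (u : R -> R) (t : R) := forall e, 0 < e ->
  exists2 d, 0 < d & forall s, 0 <= s -> `|s - t| < d -> `|u s - u t| < e.

Lemma cont_atN u t : cont_at u t -> cont_at (fun s => - u s) t.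
Proof.
move=> H e e0; have [d d0 Hd] := H e e0; exists d => // s s0 st.
by rewrite -opprD normrN; apply: Hd.
Qed.

Lemma close_lo (u : R -> R) (a t c : R) : 0 <= a -> a < t -> cont_at u t ->
  (forall s, a <= s < t -> c <= u s) -> c <= u t.
Proof.
move=> a0 at_ Hc H; rewrite leNgt; apply/negP => ut.
have cu0 : 0 < c - u t by rewrite subr_gt0.
have [d d0 Hd] := Hc (c - u t) cu0.
pose s := Num.max a (t - d / 2).
have as_ : a <= s by rewrite /s le_max lexx.
have st : s < t by rewrite /s gt_max at_ /=; lra.
have := H s; rewrite as_ st => /(_ isT) cs.
have : `|s - t| < d.
  rewrite ltr_norml; apply/andP; split; last lra.
  have : t - d / 2 <= s by rewrite /s le_max lexx orbT.
  lra.
move=> /(Hd s (le_trans a0 as_)); rewrite ltr_norml => /andP[_]; lra.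
Qed.

Lemma close_hi (u : R -> R) (a t c : R) : 0 <= a -> a < t -> cont_at u t ->
  (forall s, a <= s < t -> u s <= c) -> u t <= c.
Proof.
move=> a0 at_ Hc H; rewrite -lerN2.
have := @close_lo (fun s => - u s) a t (- c) a0 at_ (cont_atN Hc).
by apply => s /H; rewrite lerN2.
Qed.

Lemma SL (u : R -> R) (t tau c ep L : R) :
  0 <= t -> t < tau -> 0 < ep -> 0 < L -> 2 * L * (tau - t) <= 1 ->
  cont_at u tau ->
  (forall s, t <= s < tau -> c - ep * (1 + 2 * L * (s - t)) < u s) ->
  (forall a, t <= a -> a < tau -> (forall s, a < s <= tau -> u s <= c) ->
     - (L * (ep * (1 + 2 * L * (tau - t)))) * (tau - a) <= u tau - u a) ->
  c - ep * (1 + 2 * L * (tau - t)) < u tau.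
Proof.
move=> t0 ttau ep0 L0 Ltau Hc Hlt Hinc.
set ph := ep * (1 + 2 * L * (tau - t)).
have phs : forall s, t <= s -> s <= tau -> ep * (1 + 2 * L * (s - t)) <= ph.
  move=> s ts stau; rewrite /ph; apply: ler_wpM2l; first exact: ltW.
  rewrite lerD2l; apply: ler_wpM2l; first by rewrite mulr_ge0 // ltW.
  by rewrite lerD2r.
have ph0 : 0 < ph by rewrite /ph mulr_gt0 // (lt_le_trans ltr01) // lerDl mulr_ge0 // ?mulr_ge0 // ltW // subr_gt0.
have ph2 : ph <= 2 * ep.
  rewrite /ph (_ : 2 * ep = ep * 2); last by ring.
  by apply: ler_wpM2l; [exact: ltW | lra].
have nonstrict : c - ph <= u tau.
  apply: (close_lo t0 ttau Hc) => s /andP[ts stau].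
  have := Hlt s; rewrite ts stau => /(_ isT).
  have := phs s ts (ltW stau); lra.
rewrite lt_neqAle nonstrict andbT; apply/negP => /eqP ueq.
have [d d0 Hd] := Hc ph ph0.
pose hh := Num.min (d / 2) (tau - t).
have hh0 : 0 < hh by rewrite /hh lt_min subr_gt0 ttau andbT; lra.
have hhd : hh <= d / 2 by rewrite /hh ge_min lexx.
have hht : hh <= tau - t by rewrite /hh ge_min lexx orbT.
pose a := tau - hh.
have ta : t <= a by rewrite /a; lra.
have atau : a < tau by rewrite /a; lra.
have := Hinc a ta atau.
have Hle : forall s, a < s <= tau -> u s <= c.
  move=> s /andP[as_ stau].
  have : `|s - tau| < d by rewrite ltr_norml; apply/andP; split; rewrite /a in as_; lra.
  move=> /(Hd s (le_trans t0 (le_trans ta (ltW as_)))).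
  rewrite ltr_norml => /andP[_]; lra.
move=> /(_ Hle) hinc.
have := Hlt a; rewrite ta atau => /(_ isT) ha.
have pha : ep * (1 + 2 * L * (a - t)) = ph - 2 * L * ep * hh.
  by rewrite /ph /a; ring.
rewrite pha in ha.
have : 0 <= L * hh * (2 * ep - ph).
  by apply: mulr_ge0; [apply: mulr_ge0; apply: ltW | lra].
have e1 : (tau - a) = hh by rewrite /a; ring.
rewrite e1 in hinc.
nra.
Qed.
End Aux.

Section Core.
Variable R : realType.
Notation mu := (@lebesgue_measure R).

Definition IB n (yl yu : 'cV[R]_n) (ep : R) (v : 'cV[R]_n) :=
  forall j, yl j 0 - ep <= v j 0 /\ v j 0 <= yu j 0 + ep.

Lemma core n (yl yu : 'cV[R]_n) (y : R -> 'cV[R]_n) (h : 'I_n -> R -> R) :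
  box yl yu (y 0) ->
  (forall t, 0 <= t -> forall e, 0 < e -> exists2 d, 0 < d &
     forall s, 0 <= s -> `|s - t| < d -> forall i, `|y s i 0 - y t i 0| < e) ->
  (forall i a b, 0 <= a -> a <= b -> mu.-integrable `]a, b] (EFin \o h i) /\
     y b i 0 - y a i 0 = \int[mu]_(x in `]a, b]) h i x) ->
  (forall t0, 0 <= t0 -> box yl yu (y t0) -> exists2 r, 0 < r & exists2 L, 0 < L &
     forall s, 0 <= s -> forall ep, 0 <= ep -> ep < r ->
     (forall j, `|y s j 0 - y t0 j 0| < r) -> IB yl yu ep (y s) ->
     forall i, (y s i 0 <= yl i 0 -> - (L * ep) <= h i s) /\
               (yu i 0 <= y s i 0 -> h i s <= L * ep)) ->
  forall t, 0 <= t -> box yl yu (y t).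
Proof.
move=> Y0 Hc Hinc Hloc.
have Hci : forall i t, 0 <= t -> cont_at (fun s => y s i 0) t.
  move=> i t t0 e e0; have [d d0 Hd] := Hc t t0 e e0.
  by exists d => // s s0 st; apply: Hd.
move=> T T0.
apply: (@real_ind _ 0 T (fun s => box yl yu (y s))) => //; last by rewrite lexx T0.
-
  move=> t /andP[t0 tT] Hlt; split => i.
  + apply: (@close_lo _ (fun s => y s i 0) 0 t) => //; first exact: Hci (ltW t0).
    by move=> s /Hlt [+ _]; apply.
  + apply: (@close_hi _ (fun s => y s i 0) 0 t) => //; first exact: Hci (ltW t0).
    by move=> s /Hlt [_ +]; apply.
-
  move=> t /andP[t0 tT] Hle.
  have Bt : box yl yu (y t) by apply: Hle; rewrite t0 lexx.
  have [r r0 [L L0 HL]] := Hloc t t0 Bt.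
  have [d0 d00 Hd0] := Hc t t0 r r0.
  pose del := Num.min d0 (1 / (2 * L)).
  have del0 : 0 < del by rewrite /del lt_min d00 /= divr_gt0 // mulr_gt0.
  exists del => // s0 /andP[ts0 s0del].
  have deld0 : del <= d0 by rewrite /del ge_min lexx.
  have delL : 2 * L * del <= 1.
    have : del <= 1 / (2 * L) by rewrite /del ge_min lexx orbT.
    rewrite ler_pdivlMr ?mulr_gt0 // => H; rewrite mulrC; lra.
  have key : forall ep, 0 < ep -> 2 * ep < r -> IB yl yu (2 * ep) (y s0).
    move=> ep ep0 epr.
    pose ph s := ep * (1 + 2 * L * (s - t)).
    have phm : forall s s', s <= s' -> ph s <= ph s'.
      move=> s s' ss'; rewrite /ph; apply: ler_wpM2l; first exact: ltW.
      rewrite lerD2l; apply: ler_wpM2l; first by rewrite mulr_ge0 // ltW.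
      by rewrite lerD2r.
    have phge : forall s, t <= s -> ep <= ph s.
      move=> s ts; have := phm t s ts; rewrite /ph subrr mulr0 addr0 mulr1 //.
    have ph2 : forall s, s <= s0 -> ph s <= 2 * ep.
      move=> s ss0; rewrite /ph (_ : 2 * ep = ep * 2); last by ring.
      apply: ler_wpM2l; first exact: ltW.
      have : 2 * L * (s - t) <= 2 * L * del.
        by apply: ler_wpM2l; [rewrite mulr_ge0 // ltW | lra].
      lra.
    have near_t : forall s, t <= s -> s <= s0 -> forall j, `|y s j 0 - y t j 0| < r.
      move=> s ts ss0; apply: Hd0; first exact: le_trans t0 ts.
      rewrite ger0_norm ?subr_ge0 //; lra.
    pose Q2 s := forall j, yl j 0 - ph s < y s j 0 /\ y s j 0 < yu j 0 + ph s.
    suff : Q2 s0.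
      move=> HQ j; have [h1 h2] := HQ j; have := ph2 s0 (lexx _); lra.
    apply: (@real_ind _ t s0 Q2); last by rewrite lexx ltW.
    + exact: ltW.
    + move=> j; have [h1 h2] := Bt; have := h1 j; have := h2 j.
      have := phge t (lexx _); lra.
    +
      move=> tau /andP[ttau taus0] Hlt.
      have tau0 : 0 <= tau by apply: le_trans t0 (ltW ttau).
      have nons : IB yl yu (ph tau) (y tau).
        move=> j; split.
        * apply: (@close_lo _ (fun s => y s j 0) t tau) => //; first exact: Hci.
          move=> s /andP[ts stau]; have [h1 _] := Hlt s (ltac:(by rewrite ts stau)) j.
          have := phm s tau (ltW stau); lra.
        * apply: (@close_hi _ (fun s => y s j 0) t tau) => //; first exact: Hci.
          move=> s /andP[ts stau]; have [_ h2] := Hlt s (ltac:(by rewrite ts stau)) j.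
          have := phm s tau (ltW stau); lra.
      have IBs : forall s, t <= s -> s <= tau -> IB yl yu (ph tau) (y s).
        move=> s ts; rewrite le_eqVlt => /orP[/eqP -> //|stau] j.
        have [h1 h2] := Hlt s (ltac:(by rewrite ts stau)) j.
        have := phm s tau (ltW stau); lra.
      have bnd : forall s, t <= s -> s <= tau -> forall i,
          (y s i 0 <= yl i 0 -> - (L * ph tau) <= h i s) /\
          (yu i 0 <= y s i 0 -> h i s <= L * ph tau).
        move=> s ts stau; apply: HL.
        * exact: le_trans t0 ts.
        * exact: le_trans (ltW ep0) (phge _ (ltW ttau)).
        * by apply: le_lt_trans (ph2 _ taus0) _.
        * by apply: near_t => //; apply: le_trans taus0.
        * exact: IBs.
      have tauL : 2 * L * (tau - t) <= 1.
        have : 2 * L * (tau - t) <= 2 * L * del.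
          by apply: ler_wpM2l; [rewrite mulr_ge0 // ltW | lra].
        lra.
      move=> i; split.
      * apply: (@SL _ (fun s => y s i 0) t tau (yl i 0) ep L) => //.
        - exact: Hci.
        - by move=> s /Hlt /(_ i) [].
        - move=> a ta atau Hle'.
          have a0 : 0 <= a by apply: le_trans t0 ta.
          have [hi he] := Hinc i a tau a0 (ltW atau).
          rewrite he; apply: int_lb => //; first exact: ltW.
          move=> s /andP[as_ stau].
          by have [+ _] := bnd s (le_trans ta (ltW as_)) stau i; apply; apply: Hle'; rewrite as_ stau.
      * have := @SL _ (fun s => - y s i 0) t tau (- yu i 0) ep L t0 ttau ep0 L0 tauL.
        move=> /(_ (cont_atN (Hci i tau tau0))).
        have H1 : forall s, t <= s < tau -> - yu i 0 - ep * (1 + 2 * L * (s - t)) < - y s i 0.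
          by move=> s /Hlt /(_ i) [_]; rewrite /ph; lra.
        move=> /(_ H1).
        have H2 : forall a, t <= a -> a < tau -> (forall s, a < s <= tau -> - y s i 0 <= - yu i 0) ->
           - (L * (ep * (1 + 2 * L * (tau - t)))) * (tau - a) <= - y tau i 0 - - y a i 0.
          move=> a ta atau Hle'.
          have a0 : 0 <= a by apply: le_trans t0 ta.
          have [hi he] := Hinc i a tau a0 (ltW atau).
          have : \int[mu]_(x in `]a, tau]) h i x <= (L * ph tau) * (tau - a).
            apply: int_ub => //; first exact: ltW.
            move=> s /andP[as_ stau].
            have [_ +] := bnd s (le_trans ta (ltW as_)) stau i; apply.
            by rewrite -lerN2; apply: Hle'; rewrite as_ stau.
          rewrite -he /ph; lra.
        move=> /(_ H2); rewrite -/(ph tau); lra.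
    +
      move=> tau /andP[ttau taus0] Hle2.
      have tau0 : 0 <= tau by apply: le_trans t0 ttau.
      have Qt := Hle2 tau (ltac:(by rewrite ttau lexx)).
      have [m m0 Hm] : exists2 m, 0 < m & forall j, m <= y tau j 0 - (yl j 0 - ph tau) /\ m <= yu j 0 + ph tau - y tau j 0.
        apply: fin_min.
          move=> j e e' e'0 ee' [h1 h2]; split; exact: le_trans ee' _.
        move=> j; have [h1 h2] := Qt j.
        exists (Num.min (y tau j 0 - (yl j 0 - ph tau)) (yu j 0 + ph tau - y tau j 0)).
          by rewrite lt_min !subr_gt0 h1 h2.
        by split; rewrite ge_min lexx ?orbT.
      have [d dd0 Hd] := Hc tau tau0 m m0.
      exists d => // s /andP[taus sd] j.
      have := Hd s (le_trans tau0 (ltW taus)) ltac:(rewrite ger0_norm ?subr_ge0 ?ltW //; lra) j.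
      rewrite ltr_norml => /andP[e1 e2].
      have [m1 m2] := Hm j.
      have := phm tau s (ltW taus); lra.
  split => i.
  + rewrite leNgt; apply/negP => yi.
    pose ep := Num.min (r / 4) ((yl i 0 - y s0 i 0) / 4).
    have ep0 : 0 < ep by rewrite /ep lt_min !divr_gt0 // subr_gt0.
    have e1 : ep <= r / 4 by rewrite /ep ge_min lexx.
    have e2 : ep <= (yl i 0 - y s0 i 0) / 4 by rewrite /ep ge_min lexx orbT.
    have [k1 _] := key ep ep0 ltac:(lra) i; lra.
  + rewrite leNgt; apply/negP => yi.
    pose ep := Num.min (r / 4) ((y s0 i 0 - yu i 0) / 4).
    have ep0 : 0 < ep by rewrite /ep lt_min !divr_gt0 // subr_gt0.
    have e1 : ep <= r / 4 by rewrite /ep ge_min lexx.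
    have e2 : ep <= (y s0 i 0 - yu i 0) / 4 by rewrite /ep ge_min lexx orbT.
    have [_ k2] := key ep ep0 ltac:(lra) i; lra.
Qed.
End Core.

Section Aux2.
Variable R : realType.
Notation mu := (@lebesgue_measure R).

Lemma Rint_sum (D : set R) (I : Type) (r : seq I) (c : I -> R) (g : I -> R -> R) :
  measurable D -> (forall j, mu.-integrable D (EFin \o g j)) ->
  mu.-integrable D (EFin \o (fun s => \sum_(j <- r) c j * g j s)) /\
  \int[mu]_(s in D) (\sum_(j <- r) c j * g j s) = \sum_(j <- r) c j * \int[mu]_(s in D) g j s.
Proof.
move=> mD gi; elim: r => [|j r [IHi IHe]].
  rewrite big_nil; under eq_Rintegral do rewrite big_nil.
  split; first by rewrite (_ : _ \o _ = cst 0%E); [exact: integrable0 | apply/funext => s /=; rewrite big_nil].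
  by rewrite Rintegral_cst // mul0r.
have e1 : (fun s => \sum_(j0 <- j :: r) c j0 * g j0 s) = (fun s => c j * g j s + \sum_(j0 <- r) c j0 * g j0 s).
  by apply/funext => s; rewrite big_cons.
have ij : mu.-integrable D (EFin \o (fun s => c j * g j s)).
  rewrite (_ : EFin \o _ = (fun x => (c j)%:E * (EFin \o g j) x)%E).
    exact: integrableZl.
  by apply/funext => s /=; rewrite EFinM.
rewrite e1 big_cons; split.
  rewrite (_ : EFin \o _ = ((EFin \o (fun s => (c j * g j s)%R)) \+ (EFin \o (fun s => (\sum_(j0 <- r) c j0 * g j0 s)%R)))%E).
    by apply: integrableD.
  by apply/funext => s /=; rewrite EFinD.
rewrite RintegralD // RintegralZl // IHe //.
Qed.

Lemma clamp_props (a b v ep : R) : 0 <= ep -> a <= b -> a - ep <= v -> v <= b + ep ->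
  let z := Num.max a (Num.min b v) in
  [/\ a <= z, z <= b, `|z - v| <= ep, (v <= a -> z = a) & (b <= v -> z = b)].
Proof.
move=> ep0 ab h1 h2 z.
have [bv|vb] := leP b v.
  have zb : z = b by rewrite /z (min_l bv) (max_r ab).
  rewrite zb; split => //; first by rewrite ler_norml; apply/andP; split; lra.
  by move=> va; apply/eqP; rewrite eq_le ab; lra.
have [av|va] := leP a v.
  have zv : z = v by rewrite /z (min_r (ltW vb)) (max_r av).
  rewrite zv; split; [exact: av | exact: ltW | by rewrite subrr normr0 |
    by move=> va'; apply/eqP; rewrite eq_le va' av | by move=> bv; lra].
have zb : z = a by rewrite /z (min_r (ltW vb)) (max_l (ltW va)).
rewrite zb; split => //; first by rewrite ler_norml; apply/andP; split; lra.
Qed.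
End Aux2.

Unset Implicit Arguments. Set Strict Implicit.
Notation mu := (@lebesgue_measure _).

Lemma entryB (R : realType) m k (M M' : 'M[R]_(m, k)) i j : (M - M') i j = M i j - M' i j.
Proof. by rewrite !mxE. Qed.

Theorem theorem2 (R : realType) (n p q : nat)
  (f : 'cV[R]_n -> 'cV[R]_p -> 'cV[R]_q -> 'cV[R]_n) (N : 'cV[R]_n -> 'cV[R]_p)
  (wl wu : 'cV[R]_q) (T : 'M[R]_n) (S : set 'cV[R]_n)
  (Gl Gu : 'cV[R]_n -> 'cV[R]_n -> 'cV[R]_q -> 'cV[R]_q -> 'cV[R]_n)
  (yl0 yu0 : 'cV[R]_n) :
  jointly_continuous (closed_loop f N) ->
  locally_lipschitz_x (closed_loop f N) (box wl wu) ->
  T \in unitmx ->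
  localized_inclusion (transformed T f N) S Gl Gu ->
  box yl0 yu0 `<=` S ->
  ge_SE0 (emb_lo Gl yl0 yu0 wl wu) (emb_up Gu yl0 yu0 wl wu) ->
  robustly_forward_invariant (closed_loop f N) (paralleletope T yl0 yu0) (box wl wu).
Proof.
move=> Hcont Hlip HT Hincl HS [Elo Eup] w x pcw Ww sol [y0 By0 Ey0] t t0.
set A := invmx T.
pose F := closed_loop f N.
pose Y s := T *m x s.
pose h i s := (T *m F (x s) (w s)) i 0.
have xY : forall s, x s = A *m Y s by move=> s; rewrite /Y /A mulKmx.
suff BY : box yl0 yu0 (Y t) by exists (Y t) => //; rewrite -xY.
apply: (@core R n yl0 yu0 Y h) => //.
- by rewrite /Y -Ey0 mulKVmx.
- move=> s0 s00 e e0.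
  have K0 := mxK_gt0 T.
  have eK0 : 0 < e / mxK T by rewrite divr_gt0.
  have [d d0 Hd] : exists2 d, 0 < d & forall j, forall s, 0 <= s -> `|s - s0| < d ->
      `|x s j 0 - x s0 j 0| < e / mxK T.
    apply: fin_min.
      by move=> j d d' d'0 dd' H s s0' sd; apply: H => //; apply: lt_le_trans dd'.
    move=> j.
    have s01 : s0 < s0 + 1 by rewrite ltrDl.
    have [int1 _] := sol (s0 + 1) (ltW (le_lt_trans s00 s01)) j.
    have [d d0 Hd] := pint_cont s00 s01 int1 eK0.
    exists d => // s s0' sd.
    have [_ e1] := sol s s0' j; have [_ e2] := sol s0 s00 j.
    rewrite e1 e2 (_ : forall u v w : R, u + v - (u + w) = v - w); first exact: Hd.
    by move=> *; ring.
  exists d => // s s0' sd i.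
  rewrite (_ : Y s i 0 - Y s0 i 0 = (Y s - Y s0) i 0); last by rewrite !mxE.
  apply: (le_lt_trans (norm_entry _ i 0)).
  rewrite /Y -mulmxBr.
  apply: (le_lt_trans (mulmx_norm _ _)).
  rewrite (_ : e = mxK T * (e / mxK T)); last by rewrite mulrC divfK // gt_eqF.
  rewrite ltr_pM2l //; apply: norm_lt => // j k.
  by rewrite (ord1 k) !mxE; exact: (Hd j s s0' sd).
- move=> i a b a0 ab.
  have xinc : forall j, mu.-integrable `]a, b] (EFin \o (fun s => F (x s) (w s) j 0)) /\
      x b j 0 - x a j 0 = \int[mu]_(s in `]a, b]) F (x s) (w s) j 0.
    move=> j.
    have b0 : 0 <= b by apply: le_trans a0 ab.
    have [ib eb] := sol b b0 j; have [_ ea] := sol a a0 j.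
    split.
      apply: integrableS ib => //; move=> s; rewrite /= !in_itv /= => /andP[h1 h2].
      by rewrite h2 andbT; apply: le_trans a0 (ltW h1).
    rewrite eb ea (_ : forall u v w : R, u + v - (u + w) = v - w); last by move=> *; ring.
    by rewrite (Rintegral_itvB ib) // bnd_simp.
  have [hi he] := @Rint_sum R `]a, b] 'I_n (index_enum 'I_n) (fun j => T i j)
     (fun j s => F (x s) (w s) j 0) (measurable_itv _) (fun j => (xinc j).1).
  have hE : h i = (fun s => \sum_(j <- index_enum 'I_n) T i j * F (x s) (w s) j 0).
    by apply/funext => s; rewrite /h mxE.
  rewrite hE; split => //; rewrite he /Y !mxE -sumrB.
  by apply: eq_bigr => j _; rewrite -mulrBr (xinc j).2.
- move=> t1 t10 Bt1.
  have [r0 [L0 [r00 HL0]]] := Hlip (x t1).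
  have KA0 := mxK_gt0 A; have KT0 := mxK_gt0 T.
  set KA := mxK A; set KT := mxK T.
  have r0' : 0 < r0 / (2 * KA) by rewrite divr_gt0 // mulr_gt0.
  exists (r0 / (2 * KA)) => //.
  have LL0 : 0 <= KT * `|L0| * KA by rewrite mulr_ge0 // ?mulr_ge0 // ltW.
  exists (KT * `|L0| * KA + 1); first lra.
  move=> s s0 ep ep0 epr near IBs i.
  have ylu : forall j, yl0 j 0 <= yu0 j 0 by move=> j; case: Bt1 => h1 h2; exact: le_trans (h1 j) (h2 j).
  pose z := \col_j Num.max (yl0 j 0) (Num.min (yu0 j 0) (Y s j 0)).
  have zP : forall j, [/\ yl0 j 0 <= z j 0, z j 0 <= yu0 j 0, `|z j 0 - Y s j 0| <= ep,
      (Y s j 0 <= yl0 j 0 -> z j 0 = yl0 j 0) & (yu0 j 0 <= Y s j 0 -> z j 0 = yu0 j 0)].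
    by move=> j; rewrite mxE; apply: clamp_props => //; case: (IBs j).
  have Wt : box wl wu (w s) := Ww s s0.
  have lipb : `|h i s - transformed T f N z (w s) i 0| <= (KT * `|L0| * KA + 1) * ep.
    have eg : transformed T f N z (w s) = T *m F (A *m z) (w s) by [].
    rewrite eg.
    have -> : h i s - (T *m F (A *m z) (w s)) i 0 = (T *m F (x s) (w s) - T *m F (A *m z) (w s)) i 0.
      by rewrite entryB.
    rewrite -mulmxBr.
    apply: (le_trans (norm_entry _ i 0)); apply: (le_trans (mulmx_norm _ _)).
    have r2 : KA * (r0 / (2 * KA)) = r0 / 2 by field; rewrite gt_eqF.
    have hx : `|x s - x t1| < r0.
      rewrite !xY -mulmxBr; apply: (le_lt_trans (mulmx_norm _ _)).
      have : `|Y s - Y t1| < r0 / (2 * KA).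
        by apply: norm_lt => // j k; rewrite (ord1 k) entryB; exact: near.
      rewrite -(ltr_pM2l KA0) r2 => H; lra.
    have hz : `|A *m z - x t1| < r0.
      rewrite xY -mulmxBr; apply: (le_lt_trans (mulmx_norm _ _)).
      have : `|z - Y t1| < 2 * (r0 / (2 * KA)).
        apply: norm_lt => [|j k]; first by rewrite mulr_gt0.
        rewrite (ord1 k) entryB.
        have := near j; case: (zP j) => _ _ h3 _ _.
        have := ler_distD (Y s j 0) (z j 0) (Y t1 j 0).
        rewrite distrC => hh hn; lra.
      rewrite -(ltr_pM2l KA0) => H.
      have : KA * (2 * (r0 / (2 * KA))) = r0 by field; rewrite gt_eqF.
      change (mxK A) with KA in H |- *; lra.
    have Lip := HL0 (x s) (A *m z) (w s) hx hz Wt.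
    have hX : `|x s - A *m z| <= KA * ep.
      rewrite xY -mulmxBr; apply: (le_trans (mulmx_norm _ _)); apply: ler_wpM2l; first exact: ltW.
      apply: norm_le => // j k; rewrite (ord1 k) entryB distrC.
      by case: (zP j).
    have L0X : L0 * `|x s - A *m z| <= `|L0| * (KA * ep).
      apply: (le_trans (ler_wpM2r (normr_ge0 _) (ler_norm L0))).
      by apply: ler_wpM2l.
    apply: (le_trans (ler_wpM2l (ltW KT0) (le_trans Lip L0X))).
    have -> : KT * (`|L0| * (KA * ep)) = KT * `|L0| * KA * ep by ring.
    rewrite mulrDl mul1r; lra.
  split.
  + move=> yle.
    have zi : z i 0 = yl0 i 0 by case: (zP i) => _ _ _ -> .
    have Bz' : box yl0 (repl yu0 i yl0) z.
      split => j; first by case: (zP j).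
      rewrite (_ : repl yu0 i yl0 j 0 = if j == i then yl0 j 0 else yu0 j 0); last by rewrite mxE.
      case: (j =P i) => [->|_]; first by rewrite zi.
      by case: (zP j).
    have sub : box yl0 (repl yu0 i yl0) `<=` S.
      move=> v [h1 h2]; apply: HS; split => // j; apply: le_trans (h2 j) _.
      by rewrite mxE; case: (j =P i) => [->|_]; [exact: ylu | exact: lexx].
    have [H1 _] := Hincl yl0 (repl yu0 i yl0) wl wu sub z (w s) Bz' Wt.
    have E := Elo i; rewrite !mxE in E.
    have := H1 i; move: lipb; rewrite ler_norml => /andP[l1 l2].
    lra.
  + move=> yge.
    have zi : z i 0 = yu0 i 0 by case: (zP i) => _ _ _ _ ->.
    have Bz' : box (repl yl0 i yu0) yu0 z.
      split => j; last by case: (zP j).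
      rewrite (_ : repl yl0 i yu0 j 0 = if j == i then yu0 j 0 else yl0 j 0); last by rewrite mxE.
      case: (j =P i) => [->|_]; first by rewrite zi.
      by case: (zP j).
    have sub : box (repl yl0 i yu0) yu0 `<=` S.
      move=> v [h1 h2]; apply: HS; split => // j; apply: le_trans _ (h1 j).
      by rewrite mxE; case: (j =P i) => [->|_]; [exact: ylu | exact: lexx].
    have [_ H1] := Hincl (repl yl0 i yu0) yu0 wl wu sub z (w s) Bz' Wt.
    have E := Eup i; rewrite !mxE in E.
    have := H1 i; move: lipb; rewrite ler_norml => /andP[l1 l2].
    lra.
Qed.
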